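(* Let $b\in(0,1]$ and let $f:[0,1]\to[0,1]$ be $$f(x)=\begin{cases} x, & 0\le x\le \tfrac12,\\ x(1-b+bx), & \tfrac12<x\le 1.\end{cases}$$ Then: (1) The set of fixed points of $f$ is $[0,\tfrac12]\cup\{1\}$. (2) For every $x\in(\tfrac12,1)$ there exists $n\in\mathbb N$ such that $f^n(x)=p$ and $f^{n+1}(x)=f(p)=p$ for some $p\in(\tfrac12-\tfrac b4,\tfrac12]$. (3) For every $x_0\in(\tfrac12-\tfrac b4,\tfrac12]$, the sequence defined recursively by $$x_{n+1}=\frac1b\left(\sqrt{bx_n+\left(\frac{1-b}{2}\right)^2}+\frac{b-1}{2}\right),\qquad n\ge 0,$$ consists of preimages of $x_0$: $f(x_{n+1})=x_n$ for all $n\ge 0$ (so $f^n(x_n)=x_0$), i.e. this recurrence gives the points whose orbits reach $x_0$.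
   Context: $f^n$ denotes the $n$-fold composition of $f$ with itself. This $f$ arises from a population of two species with state $(x,1-x)$, but the claim concerns only the map above. *)

(* Defs.v *)
From Stdlib Require Import Reals.
Open Scope R_scope.

(* The map f(x) = x for x <= 1/2, x(1-b+bx) for x > 1/2
   (defined on all of R; statements restrict to [0,1]). *)
Definition popmap (b x : R) : R :=
  if Rle_dec x (1/2) then x else x * (1 - b + b * x).

Definition fiter (b : R) (n : nat) (x : R) : R := Nat.iter n (popmap b) x.

Fixpoint preseq (b x0 : R) (n : nat) : R :=
  match n with
  | O => x0
  | S m => / b * (sqrt (b * preseq b x0 m + ((1 - b) / 2) ^ 2) + (b - 1) / 2)
  end.

(* Main.v *)
Require Import Defs.
From Stdlib Require Import Reals Lra Lia Psatz.
Open Scope R_scope.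

Lemma iter_r (b : R) n y : fiter b n (popmap b y) = fiter b (S n) y.
Proof.
  unfold fiter. induction n as [|n IH]; simpl; [reflexivity|].
  simpl in IH. rewrite IH. reflexivity.
Qed.

Lemma pm_le b x : x <= 1/2 -> popmap b x = x.
Proof. intro H. unfold popmap. destruct (Rle_dec x (1/2)); lra. Qed.

Lemma pm_gt b x : 1/2 < x -> popmap b x = x * (1 - b + b * x).
Proof. intro H. unfold popmap. destruct (Rle_dec x (1/2)); lra. Qed.

Lemma part2 b (hb : 0 < b <= 1) x (hx : 1/2 < x < 1) :
  forall N : nat, forall y, 1/2 < y <= x -> y - 1/2 <= INR N * (b * (1 - x) / 2) ->
     exists (n : nat) (p : R),
       1/2 - b/4 < p <= 1/2 /\ fiter b n y = p /\
       fiter b (S n) y = p /\ popmap b p = p.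
Proof.
  induction N as [|N IH]; intros y Hy Hd.
  - simpl in Hd. lra.
  - set (z := y * (1 - b + b * y)).
    assert (Hz1 : 1/2 - b/4 < z).
    { unfold z. assert (0 <= (y - 1/2) * (1 - b)) by nra. assert (0 < b * (y - 1/2) * (y + 1/2)) by (apply Rmult_lt_0_compat; [apply Rmult_lt_0_compat|]; lra). nra. }
    assert (Hfz : popmap b y = z) by (apply pm_gt; lra).
    destruct (Rle_dec z (1/2)) as [Hz|Hz].
    + exists 1%nat, z. simpl. rewrite Hfz, (pm_le b z Hz). lra.
    + assert (Hzx : z <= x) by (unfold z; assert (0 <= b * y * (1 - y)) by (apply Rmult_le_pos; [apply Rmult_le_pos|]; lra); nra).
      assert (Hd' : z - 1/2 <= INR N * (b * (1 - x) / 2)).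
      { rewrite S_INR in Hd. unfold z.
        assert (y * (1 - y) >= (1 - x) / 2) by nra. assert (b * (y * (1 - y)) >= b * ((1 - x) / 2)) by (apply Rmult_ge_compat_l; lra). nra. }
      destruct (IH z ltac:(lra) Hd') as [n [p [H1 [H2 [H3 H4]]]]].
      exists (S n), p. rewrite <- (iter_r b n y), <- (iter_r b (S n) y), Hfz. exact (conj H1 (conj H2 (conj H3 H4))).
Qed.

Lemma step b (hb : 0 < b <= 1) y (hy : 1/2 - b/4 < y) :
  1/2 < / b * (sqrt (b * y + ((1 - b) / 2) ^ 2) + (b - 1) / 2) /\
  popmap b (/ b * (sqrt (b * y + ((1 - b) / 2) ^ 2) + (b - 1) / 2)) = y.
Proof.
  set (c := (1 - b) / 2).
  assert (Ha : 1/4 < b * y + c ^ 2) by (unfold c; nra).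
  set (s := sqrt (b * y + c ^ 2)).
  assert (Hs2 : s * s = b * y + c ^ 2) by (apply sqrt_sqrt; lra).
  assert (Hs0 : 0 <= s) by apply sqrt_pos.
  assert (Hs : 1/2 < s) by (destruct (Rlt_le_dec (1/2) s) as [h|h]; [exact h|]; assert (s * s <= 1/2 * (1/2)) by (apply Rmult_le_compat; lra); lra).
  assert (Hb : b <> 0) by lra.
  set (w := / b * (s + (b - 1) / 2)).
  assert (Hbw : b * w = s - c) by (unfold w, c; field; auto).
  assert (Hw : 1/2 < w).
  { assert (b * w > b * (1/2)) by (unfold c in Hbw; lra).
    apply Rmult_gt_reg_l with b; lra. }
  split; [exact Hw|].
  rewrite pm_gt by exact Hw.
  apply Rmult_eq_reg_l with b; [|exact Hb].
  replace (1 - b) with (2 * c) by (unfold c; field).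
  replace (b * (w * (2 * c + b * w))) with ((b * w) * (2 * c + b * w)) by ring.
  rewrite Hbw. nra.
Qed.

Lemma preseq_bound b (hb : 0 < b <= 1) x0 (hx : 1/2 - b/4 < x0 <= 1/2) n :
  1/2 - b/4 < preseq b x0 n.
Proof.
  induction n as [|n IH]. simpl; lra.
  destruct (step b hb _ IH). change (preseq b x0 (S n)) with (/ b * (sqrt (b * preseq b x0 n + ((1 - b) / 2) ^ 2) + (b - 1) / 2)). lra.
Qed.

Theorem proposition3p5 (b : R) (hb : 0 < b <= 1) :
  (* (1) fixed points of f on [0,1] are [0,1/2] ∪ {1} *)
  (forall x, 0 <= x <= 1 -> (popmap b x = x <-> (x <= 1/2 \/ x = 1))) /\
  (* (2) orbits from (1/2,1) land on a fixed point in (1/2 - b/4, 1/2] *)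
  (forall x, 1/2 < x < 1 ->
     exists (n : nat) (p : R),
       1/2 - b/4 < p <= 1/2 /\ fiter b n x = p /\
       fiter b (S n) x = p /\ popmap b p = p) /\
  (* (3) the recurrence gives preimages of x0 *)
  (forall x0, 1/2 - b/4 < x0 <= 1/2 ->
     forall n : nat,
       popmap b (preseq b x0 (S n)) = preseq b x0 n /\
       fiter b n (preseq b x0 n) = x0).
Proof.
  split; [|split].
  - intros x Hx. split.
    + intro H. destruct (Rle_dec x (1/2)) as [h|h]; [now left|right].
      rewrite pm_gt in H by lra.
      assert (x * (b * (x - 1)) = 0) by nra.
      apply Rmult_integral in H0. destruct H0; [lra|].
      apply Rmult_integral in H0. destruct H0; lra.
    + intros [H|H]. now apply pm_le.
      subst. rewrite pm_gt by lra. ring.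
  - intros x Hx.
    destruct (INR_archimed (b * (1 - x) / 2) (x - 1/2)) as [N HN].
    { apply Rmult_gt_0_compat; [apply Rmult_gt_0_compat|]; lra. }
    apply (part2 b hb x Hx N x); lra.
  - intros x0 Hx0 n.
    assert (Hp : forall m, popmap b (preseq b x0 (S m)) = preseq b x0 m).
    { intro m. simpl. apply (step b hb), preseq_bound; auto. }
    split; [apply Hp|].
    induction n as [|n IH]; [reflexivity|].
    rewrite <- iter_r, Hp. exact IH.
Qed.
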